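(* Let $p>0$, $N\ge2$, $1\le K\le N-1$, $\alpha_1,\dots,\alpha_N>0$ with $\sum_{j=1}^K\alpha_j^{-2/p}=\sum_{j=K+1}^N\alpha_j^{-2/p}$, let $a\in\mathbb{R}$, and let $L_+$ be the linearized operator at the shifted state with shift $a$. For $\lambda<1$ let $v=v(\cdot;\lambda)$ be the unique $C^1(\mathbb{R})$ solution of $-v''+v-(2p+1)(p+1)\operatorname{sech}^2(px)v=\lambda v$ with $\lim_{x\to+\infty}v(x)e^{\sqrt{1-\lambda}x}=1$. Then $\lambda_0\in(-\infty,1)$ is an eigenvalue of $L_+$ if and only if, with $v=v(\cdot;\lambda_0)$, one of the following holds: (a) $v(a)=0$; (b) $v(-a)=0$; (c) $v(-a)v'(a)+v(a)v'(-a)=0$. Moreover, $\lambda_0$ has multiplicity $K-1$ in case (a), $N-K-1$ in case (b), and is simple in case (c); if $\lambda_0$ satisfies several of the cases, its multiplicity is the sum of the multiplicities of those cases.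
   Context: $\Gamma$ is a star graph of $N$ half-lines $\mathbb{R}^+$ joined at the vertex $x=0$; $L^2(\Gamma)=\oplus_{j=1}^NL^2(\mathbb{R}^+)$; $H^1_\Gamma=\{\Psi\in\oplus_jH^1(\mathbb{R}^+):\alpha_1^{1/p}\psi_1(0)=\dots=\alpha_N^{1/p}\psi_N(0)\}$; $H^2_\Gamma=\{\Psi\in\oplus_jH^2(\mathbb{R}^+)\cap H^1_\Gamma:\sum_j\alpha_j^{-1/p}\psi_j'(0)=0\}$. The shifted state is $\Phi=(\phi_1,\dots,\phi_N)^T$ with $\phi_j(x)=\alpha_j^{-1/p}\phi(x+a)$ for $j\le K$, $\phi_j(x)=\alpha_j^{-1/p}\phi(x-a)$ for $j>K$, $\phi(x)=\operatorname{sech}^{1/p}(px)$. $L_+:H^2_\Gamma\subset L^2(\Gamma)\to L^2(\Gamma)$ acts by $(L_+U)_j=-u_j''+u_j-(2p+1)(p+1)\alpha_j^2\phi_j^{2p}u_j$. *)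

(* Defs.v *)
From Stdlib Require Import Reals Lra.
From Coquelicot Require Import Coquelicot.
Open Scope R_scope.

(* Edges are indexed 0-based by j < N; the paper's edges 1..K are j < K,
   the edges K+1..N are K <= j < N. *)

Fixpoint rsum (f : nat -> R) (n : nat) : R :=
  match n with
  | O => 0
  | S n' => rsum f n' + f n'
  end.

Definition sech (x : R) : R := / cosh x.

Definition phi (p x : R) : R := Rpower (sech (p * x)) (1 / p).

Definition Phi_comp (p : R) (K : nat) (alpha : nat -> R) (a : R)
  (j : nat) (x : R) : R :=
  if (j <? K)%nat then Rpower (alpha j) (- (1 / p)) * phi p (x + a)
  else Rpower (alpha j) (- (1 / p)) * phi p (x - a).

Definition Lplus_pot (p : R) (K : nat) (alpha : nat -> R) (a : R)
  (j : nat) (x : R) : R :=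
  (2 * p + 1) * (p + 1) * (alpha j) ^ 2 * Rpower (Phi_comp p K alpha a j x) (2 * p).

(* u : R -> R, considered on the half-line [0, +oo), belongs (classically)
   to H^2(R^+): twice differentiable at every x >= 0, with u, u', u''
   square integrable on [0, +oo). *)
Definition H2_halfline (u : R -> R) : Prop :=
  (forall x, 0 <= x -> ex_derive u x /\ ex_derive (Derive u) x) /\
  ex_RInt_gen (fun x => (u x) ^ 2) (at_point 0) (Rbar_locally p_infty) /\
  ex_RInt_gen (fun x => (Derive u x) ^ 2) (at_point 0) (Rbar_locally p_infty) /\
  ex_RInt_gen (fun x => (Derive (Derive u) x) ^ 2) (at_point 0) (Rbar_locally p_infty).

Definition in_H2_Gamma (p : R) (N : nat) (alpha : nat -> R)
  (U : nat -> R -> R) : Prop :=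
  (forall j, (j < N)%nat -> H2_halfline (U j)) /\
  (forall i j, (i < N)%nat -> (j < N)%nat ->
     Rpower (alpha i) (1 / p) * U i 0 = Rpower (alpha j) (1 / p) * U j 0) /\
  rsum (fun j => Rpower (alpha j) (- (1 / p)) * Derive (U j) 0) N = 0.

Definition Lplus_eigvec (p : R) (N K : nat) (alpha : nat -> R) (a lambda : R)
  (U : nat -> R -> R) : Prop :=
  in_H2_Gamma p N alpha U /\
  forall j x, (j < N)%nat -> 0 < x ->
    - Derive (Derive (U j)) x + U j x - Lplus_pot p K alpha a j x * U j x
      = lambda * U j x.

Definition is_zero_Gamma (N : nat) (U : nat -> R -> R) : Prop :=
  forall j x, (j < N)%nat -> 0 <= x -> U j x = 0.

Definition Lplus_eigenvalue (p : R) (N K : nat) (alpha : nat -> R) (a lambda : R)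
  : Prop :=
  exists U, Lplus_eigvec p N K alpha a lambda U /\ ~ is_zero_Gamma N U.

Definition eigenspace_dim (p : R) (N K : nat) (alpha : nat -> R) (a lambda : R)
  (m : nat) : Prop :=
  exists F : nat -> nat -> R -> R,
    (forall k, (k < m)%nat -> Lplus_eigvec p N K alpha a lambda (F k)) /\
    (forall c : nat -> R,
        is_zero_Gamma N (fun j x => rsum (fun k => c k * F k j x) m) ->
        forall k, (k < m)%nat -> c k = 0) /\
    (forall U, Lplus_eigvec p N K alpha a lambda U ->
       exists c : nat -> R,
         forall j x, (j < N)%nat -> 0 <= x ->
           U j x = rsum (fun k => c k * F k j x) m).

(* Main.v *)
Require Import Defs.
From Stdlib Require Import Reals.
From Coquelicot Require Import Coquelicot.
From Stdlib Require Import Lra Lia.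
Open Scope R_scope.

Lemma is_derive_mult_R (f g : R -> R) x df dg :
  is_derive f x df -> is_derive g x dg ->
  is_derive (fun t => f t * g t) x (df * g x + f x * dg).
Proof.
  intros Hf Hg.
  apply (is_derive_mult f g x df dg Hf Hg). intros; apply Rmult_comm.
Qed.

Lemma is_derive_eq (f : R -> R) x l l' : is_derive f x l -> l = l' -> is_derive f x l'.
Proof. intros H ->; exact H. Qed.

Lemma is_derive_ext_R (f g : R -> R) x l : (forall t, f t = g t) -> is_derive f x l -> is_derive g x l.
Proof. intros H. apply is_derive_ext. exact H. Qed.

Lemma nonincr_on (l : R) (g dg : R -> R) :
  (forall x, l < x -> is_derive g x (dg x)) ->
  (forall x, l < x -> dg x <= 0) ->
  forall x0 x, l < x0 -> x0 <= x -> g x <= g x0.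
Proof.
  intros Hd Hn x0 x Hx0 Hx.
  destruct (Req_dec x0 x) as [->|Hne]; [lra|].
  destruct (MVT_gen g x0 x dg) as [c [Hc Heq]].
  - intros y Hy. apply Hd. rewrite Rmin_left in Hy by lra. lra.
  - intros y Hy. rewrite Rmin_left in Hy by lra.
    apply continuity_pt_filterlim. apply (ex_derive_continuous (K:=R_AbsRing) (V:=R_NormedModule)).
    eexists; apply Hd; lra.
  - rewrite Rmin_left in Hc by lra. rewrite Rmax_right in Hc by lra.
    assert (dg c <= 0) by (apply Hn; lra). nra.
Qed.

Lemma gronwall0 (l M : R) (E E1 : R -> R) :
  0 <= M ->
  (forall x, l < x -> is_derive E x (E1 x)) ->
  (forall x, l < x -> Rabs (E1 x) <= M * E x) ->
  (forall x, l < x -> 0 <= E x) ->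
  forall x0, l < x0 -> E x0 = 0 -> forall x, l < x -> E x = 0.
Proof.
  intros HM Hd Hb Hp x0 Hx0 H0 x Hx.
  destruct (Rle_dec x0 x) as [Hle|Hlt].
  - set (g := fun y => E y * exp (- M * y)).
    assert (Hg : g x <= g x0).
    { apply (nonincr_on l g (fun y => E1 y * exp (-M*y) + E y * (-M * exp (- M * y)))); auto.
      + intros y Hy. unfold g. cbv beta. apply (is_derive_mult_R E (fun t => exp (-M*t))). apply Hd; auto.
        auto_derive; auto; ring.
      + intros y Hy. specialize (Hb y Hy). apply Rabs_le_between in Hb.
        pose proof (exp_pos (-M*y)). nra. }
    unfold g in Hg. rewrite H0 in Hg.
    pose proof (exp_pos (-M*x)). pose proof (Hp x Hx). nra.
  - set (g := fun y => - (E y * exp (M * y))).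
    assert (Hg : g x0 <= g x).
    { apply (nonincr_on l g (fun y => - (E1 y * exp (M*y) + E y * (M * exp (M * y))))); auto; try lra.
      + intros y Hy. unfold g. cbv beta. apply (is_derive_opp (K:=R_AbsRing) (V:=R_NormedModule)). apply (is_derive_mult_R E (fun t => exp (M*t))). apply Hd; auto.
        auto_derive; auto; ring.
      + intros y Hy. specialize (Hb y Hy). apply Rabs_le_between in Hb.
        pose proof (exp_pos (M*y)). pose proof (Hp y Hy). nra. }
    unfold g in Hg. rewrite H0 in Hg.
    pose proof (exp_pos (M*x)). pose proof (Hp x Hx). nra.
Qed.

Lemma ode_uniq (l M : R) (q y y1 : R -> R) :
  0 <= M ->
  (forall x, l < x -> is_derive y x (y1 x)) ->
  (forall x, l < x -> is_derive y1 x (q x * y x)) ->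
  (forall x, l < x -> Rabs (q x) <= M) ->
  forall x0, l < x0 -> y x0 = 0 -> y1 x0 = 0 -> forall x, l < x -> y x = 0.
Proof.
  intros HM Hy Hy1 Hq x0 Hx0 e0 e1 x Hx.
  assert (H := gronwall0 l (1 + M) (fun t => y t ^ 2 + y1 t ^ 2)
     (fun t => 2 * y t * y1 t * (1 + q t))).
  assert (HE : y x ^ 2 + y1 x ^ 2 = 0).
  { apply (H ltac:(lra)) with x0; auto.
    - intros t Ht. specialize (Hy t Ht). specialize (Hy1 t Ht).
      apply is_derive_ext_R with (fun t => y t * y t + y1 t * y1 t). { intros; ring. }
      eapply is_derive_eq.
      apply (is_derive_plus (K:=R_AbsRing) (V:=R_NormedModule)); apply is_derive_mult_R; eauto.
      simpl. unfold plus; simpl. ring.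
    - intros t Ht. specialize (Hq t Ht).
      rewrite !Rabs_mult. rewrite (Rabs_right 2) by lra.
      assert (Rabs (1 + q t) <= 1 + M).
      { apply Rabs_le. apply Rabs_le_between in Hq. lra. }
      assert (2 * Rabs (y t) * Rabs (y1 t) <= y t ^ 2 + y1 t ^ 2).
      { rewrite <- (pow2_abs (y t)). rewrite <- (pow2_abs (y1 t)).
        pose proof (Rabs_pos (y t)). pose proof (Rabs_pos (y1 t)). pose proof (pow2_ge_0 (Rabs (y t) - Rabs (y1 t))). nra. }
      pose proof (Rabs_pos (y t)). pose proof (Rabs_pos (y1 t)). 
      pose proof (Rabs_pos (1 + q t)). 
      apply Rle_trans with ((y t ^ 2 + y1 t ^ 2) * Rabs (1 + q t)). nra.
      rewrite Rmult_comm. apply Rmult_le_compat_r. nra. auto.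
    - intros; nra.
    - rewrite e0, e1; ring. }
  nra.
Qed.

Lemma ball_R (x y e : R) : Rabs (y - x) < e -> ball x e y.
Proof. intros H. exact H. Qed.

Lemma exp_neg_bound (b u : R) : 0 <= b * u -> exp (- (b * u)) <= / (1 + b * u).
Proof.
  intros H. rewrite exp_Ropp. apply Rinv_le_contravar. lra.
  apply exp_ineq1_le.
Qed.

Lemma ex_RInt_gen_bound (f : R -> R) (C b X : R) :
  0 < b -> 0 <= C ->
  (forall x, continuous f x) ->
  (forall x, X <= x -> Rabs (f x) <= C * exp (- (b * x))) ->
  ex_RInt_gen f (at_point 0) (Rbar_locally p_infty).
Proof.
  intros Hb HC Hc Hbd.
  set (F := fun t => RInt f 0 t).
  assert (Hex : forall u w, ex_RInt f u w).
  { intros; apply (ex_RInt_continuous (V:=R_CompleteNormedModule)); intros; apply Hc. }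
  assert (HdF : forall t, is_derive F t (f t)).
  { intros t. apply (is_derive_RInt f F 0 t).
    apply filter_forall. intros y. unfold F. apply (RInt_correct (V:=R_CompleteNormedModule)). apply Hex.
    apply Hc. }
  set (g := fun x => C * exp (- (b * x))).
  set (G := fun x => - (C / b) * exp (- (b * x))).
  assert (HG : forall x, is_derive G x (g x)).
  { intros x. unfold G, g. auto_derive; auto. field. lra. }
  assert (Hgc : forall x, continuous g x).
  { intros x. unfold g. apply (ex_derive_continuous (K:=R_AbsRing) (V:=R_NormedModule)).
    auto_derive; auto. }
  assert (Hbound : forall u w, X <= u -> 0 <= u -> u <= w -> Rabs (F w - F u) <= C / b * / (1 + b * u)).
  { intros u w Hu Hu0 Huw.
    assert (E : F w - F u = RInt f u w).
    { unfold F. rewrite <- (RInt_Chasles (V:=R_CompleteNormedModule) f 0 u w) by apply Hex. simpl. unfold plus; simpl. ring. }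
    rewrite E.
    eapply Rle_trans. apply abs_RInt_le; auto.
    eapply Rle_trans. apply (RInt_le _ g u w); auto.
    { apply (ex_RInt_continuous (V:=R_CompleteNormedModule)). intros. apply (continuous_comp f Rabs). apply Hc. apply continuous_Rabs. }
    { apply (ex_RInt_continuous (V:=R_CompleteNormedModule)). intros; apply Hgc. }
    { intros x Hx. apply Hbd. lra. }
    rewrite (is_RInt_unique (V:=R_CompleteNormedModule) g u w (minus (G w) (G u))).
    2:{ apply (is_RInt_derive (V:=R_CompleteNormedModule)). intros; apply HG. intros; apply Hgc. }
    unfold minus, plus, opp, G; simpl.
    pose proof (exp_pos (- (b * w))).
    assert (exp (- (b * u)) <= / (1 + b * u)) by (apply exp_neg_bound; nra).
    assert (0 <= C / b) by (apply Rdiv_le_0_compat; lra).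
    apply Rle_trans with (C / b * exp (- (b * u))). nra.
    apply Rmult_le_compat_l; auto. }
  assert (Hlim : exists l, filterlim F (Rbar_locally p_infty) (locally l)).
  { apply (filterlim_locally_cauchy (F := Rbar_locally p_infty)).
    intros eps.
    assert (Hbbe: 0 < b*b*eps) by (pose proof (cond_pos eps); apply Rmult_lt_0_compat; [nra|lra]).
    assert (HCd : 0 <= C/(b*b*eps)) by (apply Rdiv_le_0_compat; lra).
    exists (fun u => Rmax X 0 + C / (b * b * eps) < u). split.
    { exists (Rmax X 0 + C / (b * b * eps)). auto. }
    assert (Hk : forall u w, Rmax X 0 + C / (b * b * eps) < u -> u <= w -> Rabs (F w - F u) < eps).
    { intros u w Hu Huw.
      assert (HX : X <= u) by (pose proof (Rmax_l X 0); lra).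
      assert (H0 : 0 <= u) by (pose proof (Rmax_r X 0); lra).
      eapply Rle_lt_trans. apply Hbound; auto.
      pose proof (cond_pos eps) as Heps.
      assert (Hu2 : C / (b * b * eps) < u) by (pose proof (Rmax_r X 0); lra).
      assert (Hbu : 0 < 1 + b * u) by nra.
      apply Rmult_lt_reg_r with (b * (1 + b * u)). nra.
      replace (C / b * / (1 + b * u) * (b * (1 + b * u))) with C by (field; lra).
      assert (C < b * b * eps * u).
      { apply Rmult_lt_compat_l with (r := b * b * eps) in Hu2. 2: nra.
        replace (b * b * eps * (C / (b * b * eps))) with C in Hu2 by (field; lra). lra. }
      nra. }
    intros u w Hu Hw. apply ball_R.
    destruct (Rle_dec u w).
    - apply Hk; auto.
    - rewrite Rabs_minus_sym. apply Hk; auto; lra. }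
  destruct Hlim as [l Hl].
  exists (l - F 0).
  apply (is_RInt_gen_ext (Derive F)).
  { apply filter_forall. intros ab x _. apply is_derive_unique. apply HdF. }
  apply (is_RInt_gen_Derive F (F 0) l).
  - apply filter_forall. intros ab x _. eexists; apply HdF.
  - apply filter_forall. intros ab x _.
    apply (continuous_ext f). intros; symmetry; apply is_derive_unique; apply HdF. apply Hc.
  - intros P HP. apply locally_singleton in HP. exact HP.
  - exact Hl.
Qed.

Lemma exp_mono (x y : R) : x <= y -> exp x <= exp y.
Proof. intros H. destruct (Req_dec x y) as [->|]; [lra|]. left; apply exp_increasing; lra. Qed.

Lemma cont_pt_of_derive (f : R -> R) (x df : R) : is_derive f x df -> continuity_pt f x.
Proof.
  intros H. apply continuity_pt_filterlim.
  apply (ex_derive_continuous (K:=R_AbsRing) (V:=R_NormedModule)). eexists; exact H.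
Qed.

Lemma v_decay (v Q : R -> R) (k MQ : R) :
  0 < k -> 0 <= MQ ->
  (forall x, is_derive v x (Derive v x)) ->
  (forall x, is_derive (Derive v) x (Q x * v x)) ->
  (forall x, Rabs (Q x) <= MQ) ->
  is_lim (fun x => v x * exp (k * x)) p_infty 1 ->
  exists X, forall x, X <= x ->
    0 < v x /\ Rabs (v x) <= 2 * exp (- (k * x)) /\
    Rabs (Derive v x) <= (4 + 2 * MQ) * exp (- (k * x)).
Proof.
  intros Hk HM Hv Hv1 HQ Hl.
  apply is_lim_spec in Hl.
  destruct (Hl (mkposreal (1/2) ltac:(lra))) as [M HMl]. simpl in HMl.
  assert (Hb : forall x, M < x -> 0 < v x /\ Rabs (v x) <= 2 * exp (- (k * x))).
  { intros x Hx. specialize (HMl x Hx). apply Rabs_lt_between in HMl.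
    pose proof (exp_pos (k * x)) as He.
    assert (Hinv : exp (- (k * x)) * exp (k * x) = 1).
    { rewrite <- exp_plus. replace (- (k * x) + k * x) with 0 by ring. apply exp_0. }
    pose proof (exp_pos (- (k * x))).
    assert (0 < v x) by nra.
    split; auto. rewrite Rabs_right by lra.
    assert (v x = (v x * exp (k * x)) * exp (- (k * x))) by (rewrite Rmult_assoc; rewrite (Rmult_comm (exp (k*x))); rewrite Hinv; ring).
    rewrite H1. nra. }
  exists (M + 1). intros x Hx.
  destruct (Hb x ltac:(lra)) as [Hp Hvb]. split; auto. split; auto.
  assert (Hbx : forall t, x <= t -> Rabs (v t) <= 2 * exp (- (k * x))).
  { intros t Ht. destruct (Hb t ltac:(lra)) as [_ H]. eapply Rle_trans; [exact H|].
    apply Rmult_le_compat_l; [lra|]. apply exp_mono. nra. }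
  destruct (MVT_gen v x (x + 1) (Derive v)) as [c [Hc Ec]].
  { intros; apply Hv. }
  { intros; eapply cont_pt_of_derive; apply Hv. }
  rewrite Rmin_left in Hc by lra. rewrite Rmax_right in Hc by lra.
  destruct (MVT_gen (Derive v) x c (fun t => Q t * v t)) as [d [Hd Ed]].
  { intros; apply Hv1. }
  { intros; eapply cont_pt_of_derive; apply Hv1. }
  rewrite Rmin_left in Hd by lra. rewrite Rmax_right in Hd by lra.
  replace (Derive v x) with ((v (x + 1) - v x) / 1 - Q d * v d * (c - x)).
  2:{ assert (Derive v c = v (x+1) - v x) by (rewrite Ec; ring). unfold Rdiv; rewrite Rinv_1. lra. }
  pose proof (Hbx (x+1) ltac:(lra)). pose proof (Hbx x ltac:(lra)). pose proof (Hbx d ltac:(lra)).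
  pose proof (HQ d). pose proof (exp_pos (- (k * x))).
  assert (Rabs (Q d * v d * (c - x)) <= MQ * (2 * exp (- (k * x)))).
  { rewrite !Rabs_mult. rewrite (Rabs_right (c - x)) by lra.
    pose proof (Rabs_pos (Q d)). pose proof (Rabs_pos (v d)).
    apply Rle_trans with (Rabs (Q d) * Rabs (v d) * 1). apply Rmult_le_compat_l; nra. 
    rewrite Rmult_1_r. apply Rmult_le_compat; auto. }
  unfold Rdiv. rewrite Rinv_1, Rmult_1_r.
  eapply Rle_trans. apply Rabs_triang.
  rewrite Rabs_Ropp.
  eapply Rle_trans. apply Rplus_le_compat_r. apply Rabs_triang. rewrite Rabs_Ropp.
  nra.
Qed.

Lemma nonincr_on' (l : R) (g dg : R -> R) :
  (forall x, l < x -> is_derive g x (dg x)) ->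
  (forall x, l < x -> dg x <= 0) ->
  forall x0 x, l < x0 -> x0 <= x -> g x <= g x0.
Proof.
  intros Hd Hn x0 x Hx0 Hx.
  destruct (Req_dec x0 x) as [->|Hne]; [lra|].
  destruct (MVT_gen g x0 x dg) as [c [Hc Heq]].
  - intros y Hy. apply Hd. rewrite Rmin_left in Hy by lra. lra.
  - intros y Hy. rewrite Rmin_left in Hy by lra.
    apply continuity_pt_filterlim. apply (ex_derive_continuous (K:=R_AbsRing) (V:=R_NormedModule)).
    eexists; apply Hd; lra.
  - rewrite Rmin_left in Hc by lra. rewrite Rmax_right in Hc by lra.
    assert (dg c <= 0) by (apply Hn; lra). nra.
Qed.

Lemma const_on (l : R) (g : R -> R) :
  (forall x, l < x -> is_derive g x 0) -> forall x y, l < x -> l < y -> g x = g y.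
Proof.
  intros Hd.
  assert (H1 : forall x y, l < x -> x <= y -> g y <= g x).
  { intros x y Hx Hxy. apply (nonincr_on' l g (fun _ => 0)); auto; intros; lra. }
  assert (H2 : forall x y, l < x -> x <= y -> - g y <= - g x).
  { intros x y Hx Hxy. apply (nonincr_on' l (fun t => - g t) (fun _ => 0)); auto; try (intros; lra).
    intros t Ht. replace 0 with (opp 0 : R) by (unfold opp; simpl; ring).
    apply (is_derive_opp (K:=R_AbsRing) (V:=R_NormedModule)). auto. }
  intros x y Hx Hy. destruct (Rle_dec x y).
  - pose proof (H1 x y Hx r). pose proof (H2 x y Hx r). lra.
  - pose proof (H1 y x Hy ltac:(lra)). pose proof (H2 y x Hy ltac:(lra)). lra.
Qed.

Lemma is_derive_mult_R' (f g : R -> R) x df dg :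
  is_derive f x df -> is_derive g x dg ->
  is_derive (fun t => f t * g t) x (df * g x + f x * dg).
Proof.
  intros Hf Hg.
  apply (is_derive_mult f g x df dg Hf Hg). intros; apply Rmult_comm.
Qed.

Lemma wronskian_const (l : R) (q u u1 w w1 : R -> R) :
  (forall x, l < x -> is_derive u x (u1 x)) ->
  (forall x, l < x -> is_derive u1 x (q x * u x)) ->
  (forall x, l < x -> is_derive w x (w1 x)) ->
  (forall x, l < x -> is_derive w1 x (q x * w x)) ->
  forall x y, l < x -> l < y ->
    u x * w1 x - u1 x * w x = u y * w1 y - u1 y * w y.
Proof.
  intros Hu Hu1 Hw Hw1.
  apply (const_on l (fun t => u t * w1 t - u1 t * w t)).
  intros x Hx.
  assert (H := is_derive_minus (K:=R_AbsRing) (V:=R_NormedModule) _ _ x _ _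
     (is_derive_mult_R' u w1 x _ _ (Hu x Hx) (Hw1 x Hx))
     (is_derive_mult_R' u1 w x _ _ (Hu1 x Hx) (Hw x Hx))).
  replace 0 with (minus (u1 x * w1 x + u x * (q x * w x)) (q x * u x * w x + u1 x * w1 x)).
  exact H. unfold minus, plus, opp; simpl. ring.
Qed.

Lemma L2_const_zero (g : R -> R) (w0 : R) :
  ex_RInt_gen g (at_point 0) (Rbar_locally p_infty) ->
  (forall x, 0 < x -> Rabs w0 <= g x) -> w0 = 0.
Proof.
  intros [l Hl] Hb.
  unfold is_RInt_gen, filterlimi, filter_le, filtermapi in Hl.
  specialize (Hl (ball l (mkposreal 1 ltac:(lra)))).
  destruct Hl as [Q R0 HQ HR HP]. { apply locally_ball. }
  destruct HR as [M HM].
  destruct (Req_dec w0 0) as [|Hne]; auto. exfalso.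
  assert (Hw : 0 < Rabs w0) by (apply Rabs_pos_lt; auto).
  set (b := Rmax M 0 + 1 + (Rabs l + 1) / Rabs w0).
  assert (Hb0 : 0 <= (Rabs l + 1) / Rabs w0) by (apply Rdiv_le_0_compat; [pose proof (Rabs_pos l)|]; lra).
  assert (HbM : M < b) by (unfold b; pose proof (Rmax_l M 0); lra).
  assert (Hbp : 0 < b) by (unfold b; pose proof (Rmax_r M 0); lra).
  destruct (HP 0 b HQ (HM b HbM)) as [y [Hy Hby]]. simpl in Hy.
  assert (Hle : (b - 0) * Rabs w0 <= y).
  { assert (Hc := is_RInt_const (V:=R_NormedModule) 0 b (Rabs w0)).
    apply (is_RInt_le (fun _ => Rabs w0) g 0 b); auto. lra.
    intros x Hx; apply Hb; lra. }
  change (Rabs (y - l) < 1) in Hby.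
  apply Rabs_lt_between in Hby.
  assert (b * Rabs w0 >= Rabs l + 1 + Rabs w0).
  { unfold b. 
    replace ((Rmax M 0 + 1 + (Rabs l + 1) / Rabs w0) * Rabs w0) with
      ((Rmax M 0 + 1) * Rabs w0 + (Rabs l + 1)) by (field; lra).
    pose proof (Rmax_r M 0). nra. }
  pose proof (Rle_abs l). lra.
Qed.

Lemma cont_right_eq (f g : R -> R) :
  continuous f 0 -> continuous g 0 -> (forall x, 0 < x -> f x = g x) -> f 0 = g 0.
Proof.
  intros Hf Hg He.
  assert (Hle : filter_le (at_right 0) (locally 0)).
  { intros P HP. unfold at_right, within. apply filter_imp with P; auto. }
  apply (filterlim_locally_unique (F := at_right 0) g).
  - apply (filterlim_ext_loc f g).
    + exists (mkposreal 1 ltac:(lra)). intros y _ Hy. apply He; auto.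
    + apply (filterlim_filter_le_1 f Hle). exact Hf.
  - apply (filterlim_filter_le_1 g Hle). exact Hg.
Qed.

Lemma cont_mult_R (f g : R -> R) x :
  continuous f x -> continuous g x -> continuous (fun y => f y * g y) x.
Proof. intros; apply (continuous_mult (K:=R_AbsRing) f g x); auto. Qed.

Lemma cont_shift (w : R -> R) s x :
  continuous w (x + s) -> continuous (fun y => w (y + s)) x.
Proof.
  intros H. apply (continuous_comp (fun y => y + s) w x); auto.
  apply (continuous_plus (K:=R_AbsRing) (V:=R_NormedModule) (fun y => y) (fun _ => s)).
  apply continuous_id. apply continuous_const.
Qed.

Lemma is_derive_shift (w : R -> R) (c s x d : R) :
  is_derive w (x + s) d -> is_derive (fun t => c * w (t + s)) x (c * d).
Proof.
  intros H. apply is_derive_scal.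
  assert (H2 := is_derive_comp w (fun t => t + s) x d 1 H).
  assert (Hs : is_derive (fun t : R => t + s) x 1).
  { auto_derive; auto; ring. }
  specialize (H2 Hs). replace d with (scal 1 d : R). exact H2.
  unfold scal; simpl; unfold mult; simpl; ring.
Qed.

Definition dec (k : R) (w : R -> R) : Prop :=
  (forall x, continuous w x) /\
  exists C X, 0 <= C /\ forall x, X <= x -> Rabs (w x) <= C * exp (- (k * x)).

Lemma ex_RInt_gen_ext_R (f g : R -> R) :
  (forall x, f x = g x) ->
  ex_RInt_gen f (at_point 0) (Rbar_locally p_infty) ->
  ex_RInt_gen g (at_point 0) (Rbar_locally p_infty).
Proof.
  intros He [l Hl]. exists l. apply (is_RInt_gen_ext f); auto.
  apply filter_forall. intros; apply He.
Qed.

Lemma dec_sq_int (k : R) (w : R -> R) (c s : R) :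
  0 < k -> dec k w ->
  ex_RInt_gen (fun x => (c * w (x + s)) ^ 2) (at_point 0) (Rbar_locally p_infty).
Proof.
  intros Hk [Hc [C [X [HC Hb]]]].
  apply (ex_RInt_gen_bound _ (c ^ 2 * C ^ 2 * exp (- (2 * k * s))) (2 * k) (X - s)).
  - lra.
  - pose proof (exp_pos (- (2 * k * s))). apply Rmult_le_pos; [|lra].
    apply Rmult_le_pos; apply pow2_ge_0.
  - intros x. apply cont_mult_R.
    apply cont_mult_R. apply continuous_const. apply cont_shift. apply Hc.
    apply cont_mult_R. apply cont_mult_R. apply continuous_const. apply cont_shift. apply Hc.
    apply continuous_const.
  - intros x Hx. specialize (Hb (x + s) ltac:(lra)).
    rewrite Rabs_right by (apply Rle_ge; apply pow2_ge_0).
    assert (Hsq : w (x + s) ^ 2 <= (C * exp (- (k * (x + s)))) ^ 2).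
    { rewrite <- (pow2_abs (w (x+s))). pose proof (Rabs_pos (w (x+s))).
      apply pow_incr. auto. }
    assert (Hexp : exp (- (k * (x + s))) ^ 2 = exp (- (2 * k * s)) * exp (- (2 * k * x))).
    { simpl. rewrite Rmult_1_r. rewrite <- !exp_plus. f_equal. ring. }
    replace ((c * w (x + s)) ^ 2) with (c ^ 2 * w (x + s) ^ 2) by ring.
    replace (c ^ 2 * C ^ 2 * exp (- (2 * k * s)) * exp (- (2 * k * x))) with
      (c ^ 2 * (C ^ 2 * (exp (- (k * (x + s))) ^ 2))) by (rewrite Hexp; ring).
    apply Rmult_le_compat_l. apply pow2_ge_0.
    rewrite <- Rpow_mult_distr. auto.
Qed.

Lemma is_derive_unique_R (f : R -> R) x l1 l2 : is_derive f x l1 -> is_derive f x l2 -> l1 = l2.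
Proof.
  intros H1 H2. rewrite <- (is_derive_unique f x l1 H1). apply is_derive_unique; auto.
Qed.

Lemma shift_derivs (v Q : R -> R) (c s : R) :
  (forall x, is_derive v x (Derive v x)) ->
  (forall x, is_derive (Derive v) x (Q x * v x)) ->
  (forall x, is_derive (fun t => c * v (t + s)) x (c * Derive v (x + s))) /\
  (forall x, Derive (fun t => c * v (t + s)) x = c * Derive v (x + s)) /\
  (forall x, is_derive (Derive (fun t => c * v (t + s))) x (c * (Q (x + s) * v (x + s)))) /\
  (forall x, Derive (Derive (fun t => c * v (t + s))) x = c * (Q (x + s) * v (x + s))).
Proof.
  intros Hv Hv1.
  assert (H1 : forall x, is_derive (fun t => c * v (t + s)) x (c * Derive v (x + s))).
  { intros x. apply is_derive_shift. apply Hv. }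
  assert (H2 : forall x, Derive (fun t => c * v (t + s)) x = c * Derive v (x + s)).
  { intros x. apply is_derive_unique. apply H1. }
  assert (H3 : forall x, is_derive (Derive (fun t => c * v (t + s))) x (c * (Q (x + s) * v (x + s)))).
  { intros x. apply is_derive_ext_R with (fun t => c * Derive v (t + s)).
    { intros t; symmetry; apply H2. }
    apply is_derive_shift. apply Hv1. }
  split; [exact H1|split; [exact H2|split; [exact H3|]]].
  intros y. apply is_derive_unique. apply H3.
Qed.

Lemma H2_shift (v Q : R -> R) (k c s : R) :
  0 < k ->
  (forall x, is_derive v x (Derive v x)) ->
  (forall x, is_derive (Derive v) x (Q x * v x)) ->
  dec k v -> dec k (Derive v) -> dec k (fun y => Q y * v y) ->
  H2_halfline (fun x => c * v (x + s)).
Proof.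
  intros Hk Hv Hv1 D0 D1 D2.
  destruct (shift_derivs v Q c s Hv Hv1) as [H1 [H2 [H3 H4]]].
  split; [|split; [|split]].
  - intros x _. split; eexists; [apply H1|apply H3].
  - exact (dec_sq_int k v c s Hk D0).
  - apply ex_RInt_gen_ext_R with (fun x => (c * Derive v (x + s)) ^ 2).
    { intros; rewrite H2; auto. }
    exact (dec_sq_int k (Derive v) c s Hk D1).
  - apply ex_RInt_gen_ext_R with (fun x => (c * (fun y => Q y * v y) (x + s)) ^ 2).
    { intros; rewrite H4; auto. }
    exact (dec_sq_int k _ c s Hk D2).
Qed.

Lemma edge_form (v Q U : R -> R) (k MQ s xs : R) :
  0 < k -> 0 <= MQ ->
  (forall x, is_derive v x (Derive v x)) ->
  (forall x, is_derive (Derive v) x (Q x * v x)) ->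
  (forall x, Rabs (Q x) <= MQ) ->
  dec k v -> dec k (Derive v) ->
  H2_halfline U ->
  (forall x, 0 < x -> Derive (Derive U) x = Q (x + s) * U x) ->
  0 < xs -> v (xs + s) <> 0 ->
  (forall x, 0 <= x -> U x = U xs / v (xs + s) * v (x + s)) /\
  Derive U 0 = U xs / v (xs + s) * Derive v s.
Proof.
  intros Hk HM Hv Hv1 HQ D0 D1 [HUd [HUi0 [HUi1 _]]] HUode Hxs Hvs.
  set (c := U xs / v (xs + s)).
  set (e := fun t => v (t + s)).
  set (e1 := fun t => Derive v (t + s)).
  set (U1 := Derive U).
  assert (He : forall x, is_derive e x (e1 x)).
  { intros x. unfold e, e1. apply is_derive_ext_R with (fun t => 1 * v (t + s)).
    intros; ring. replace (Derive v (x + s)) with (1 * Derive v (x + s)) by ring.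
    apply is_derive_shift. apply Hv. }
  assert (He1 : forall x, is_derive e1 x (Q (x + s) * e x)).
  { intros x. unfold e, e1. apply is_derive_ext_R with (fun t => 1 * Derive v (t + s)).
    intros; ring. replace (Q (x + s) * v (x + s)) with (1 * (Q (x + s) * v (x + s))) by ring.
    apply is_derive_shift. apply Hv1. }
  assert (HU : forall x, 0 <= x -> is_derive U x (U1 x)).
  { intros x Hx. destruct (HUd x Hx) as [[d Hd] _]. unfold U1.
    rewrite (is_derive_unique U x d Hd). auto. }
  assert (HU1 : forall x, 0 < x -> is_derive U1 x (Q (x + s) * U x)).
  { intros x Hx. destruct (HUd x ltac:(lra)) as [_ [d Hd]]. unfold U1 in *.
    rewrite <- HUode by auto. rewrite (is_derive_unique _ x d Hd). auto. }
  set (q := fun t => Q (t + s)).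
  assert (HW : forall x, 0 < x -> U x * e1 x - U1 x * e x = U xs * e1 xs - U1 xs * e xs).
  { intros x Hx. apply (wronskian_const 0 q U U1 e e1); auto.
    intros; apply HU; lra. }
  assert (HW0 : U xs * e1 xs - U1 xs * e xs = 0).
  { apply (L2_const_zero (fun x => U x ^ 2 + U1 x ^ 2 + (1 * e x) ^ 2 + (1 * e1 x) ^ 2)).
    - destruct HUi0 as [l0 H0]. destruct HUi1 as [l1 H1].
      destruct (dec_sq_int k v 1 s Hk D0) as [l2 H2].
      destruct (dec_sq_int k (Derive v) 1 s Hk D1) as [l3 H3].
      exists (plus (plus (plus l0 l1) l2) l3).
      apply (is_RInt_gen_plus (V:=R_NormedModule) (Fa := at_point 0) (Fb := Rbar_locally p_infty)
        (fun x => U x ^ 2 + U1 x ^ 2 + (1 * e x) ^ 2) (fun x => (1 * e1 x) ^ 2)); [|exact H3].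
      apply (is_RInt_gen_plus (V:=R_NormedModule) (Fa := at_point 0) (Fb := Rbar_locally p_infty)
        (fun x => U x ^ 2 + U1 x ^ 2) (fun x => (1 * e x) ^ 2)); [|exact H2].
      apply (is_RInt_gen_plus (V:=R_NormedModule) (Fa := at_point 0) (Fb := Rbar_locally p_infty)
        (fun x => U x ^ 2) (fun x => U1 x ^ 2)); [exact H0|exact H1].
    - intros x Hx. rewrite <- (HW x Hx).
      assert (Rabs (U x * e1 x) <= U x ^ 2 + e1 x ^ 2).
      { rewrite Rabs_mult. rewrite <- (pow2_abs (U x)), <- (pow2_abs (e1 x)).
        pose proof (Rabs_pos (U x)). pose proof (Rabs_pos (e1 x)).
        pose proof (pow2_ge_0 (Rabs (U x) - Rabs (e1 x))). nra. }
      assert (Rabs (U1 x * e x) <= U1 x ^ 2 + e x ^ 2).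
      { rewrite Rabs_mult. rewrite <- (pow2_abs (U1 x)), <- (pow2_abs (e x)).
        pose proof (Rabs_pos (U1 x)). pose proof (Rabs_pos (e x)).
        pose proof (pow2_ge_0 (Rabs (U1 x) - Rabs (e x))). nra. }
      unfold Rminus. eapply Rle_trans. apply Rabs_triang. rewrite Rabs_Ropp. nra. }
  assert (Hpos : forall x, 0 < x -> U x = c * e x).
  { intros x Hx.
    assert (Hz := ode_uniq 0 MQ q (fun t => U t - c * e t) (fun t => U1 t - c * e1 t) HM).
    assert (U x - c * e x = 0); [|lra].
    apply Hz with xs; [| | | exact Hxs | | | exact Hx].
    - intros t Ht. apply (is_derive_minus (K:=R_AbsRing) (V:=R_NormedModule)).
      apply HU; lra. apply is_derive_scal. apply He.
    - intros t Ht. eapply is_derive_eq.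
      apply (is_derive_minus (K:=R_AbsRing) (V:=R_NormedModule)).
      apply HU1; lra. apply is_derive_scal. apply He1.
      unfold q, minus, plus, opp; simpl. ring.
    - intros; apply HQ.
    - unfold c, e. field. auto.
    - unfold c, e in *. apply Rmult_eq_reg_r with (v (xs + s)); auto.
      field_simplify; auto. lra. }
  assert (Hc0 : forall x, continuous (fun t => c * e t) x).
  { intros x. apply (ex_derive_continuous (K:=R_AbsRing) (V:=R_NormedModule)).
    eexists. apply is_derive_scal. apply He. }
  assert (HUc : continuous U 0).
  { apply (ex_derive_continuous (K:=R_AbsRing) (V:=R_NormedModule)). eexists; apply HU; lra. }
  split.
  - intros x Hx. destruct (Req_dec x 0) as [->|Hn].
    + apply (cont_right_eq U (fun t => c * e t)); auto.
    + apply Hpos; lra.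
  - assert (HU1c : continuous U1 0).
    { apply (ex_derive_continuous (K:=R_AbsRing) (V:=R_NormedModule)).
      destruct (HUd 0 ltac:(lra)) as [_ Hd]. exact Hd. }
    assert (Hc1 : continuous (fun t => c * e1 t) 0).
    { apply (ex_derive_continuous (K:=R_AbsRing) (V:=R_NormedModule)).
      eexists. apply is_derive_scal. apply He1. }
    assert (HH : U1 0 = c * e1 0); [|unfold U1, c, e1 in HH; rewrite Rplus_0_l in HH; exact HH].
    apply (cont_right_eq U1 (fun t => c * e1 t)); auto.
    intros x Hx. apply (is_derive_unique_R U x). apply HU; lra.
    apply (is_derive_ext_loc (fun t => c * e t)).
    + apply (locally_open (fun t => 0 < t)). apply open_gt.
      intros t Ht. symmetry. apply Hpos; auto. auto.
    + apply is_derive_scal. apply He.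
Qed.


Definition Qf (p lambda0 x : R) : R := (1 - lambda0) - (2 * p + 1) * (p + 1) * sech (p * x) ^ 2.

Lemma cosh_ge1 (y : R) : 1 <= cosh y.
Proof.
  unfold cosh. pose proof (exp_pos y).
  assert (exp (- y) = / exp y) by apply exp_Ropp.
  rewrite H0. assert (exp y + / exp y >= 2); [|lra].
  assert (exp y * / exp y = 1) by (field; lra).
  pose proof (pow2_ge_0 (exp y - 1)).
  assert (0 < / exp y) by (apply Rinv_0_lt_compat; lra). nra.
Qed.

Lemma sech_bounds (y : R) : 0 < sech y <= 1.
Proof.
  unfold sech. pose proof (cosh_ge1 y). split.
  apply Rinv_0_lt_compat; lra.
  rewrite <- Rinv_1. apply Rinv_le_contravar; lra.
Qed.

Lemma Q_bound (p lambda0 x : R) : 0 < p ->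
  Rabs (Qf p lambda0 x) <= Rabs (1 - lambda0) + (2 * p + 1) * (p + 1).
Proof.
  intros Hp. unfold Qf. destruct (sech_bounds (p * x)).
  unfold Rminus at 1. eapply Rle_trans. apply Rabs_triang. rewrite Rabs_Ropp.
  apply Rplus_le_compat_l. rewrite Rabs_right.
  2:{ apply Rle_ge. apply Rmult_le_pos. nra. nra. }
  assert (sech (p * x) ^ 2 <= 1) by nra.
  assert (0 < (2 * p + 1) * (p + 1)) by nra. nra.
Qed.

Lemma Q_cont (p lambda0 x : R) : continuous (Qf p lambda0) x.
Proof.
  apply (ex_derive_continuous (K:=R_AbsRing) (V:=R_NormedModule)).
  unfold Qf, sech, cosh. auto_derive.
  pose proof (exp_pos (p * x)). pose proof (exp_pos (- (p * x))). lra.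
Qed.

Definition sh (K : nat) (a : R) (j : nat) : R := if (j <? K)%nat then a else - a.

Lemma Rpower_pos (x y : R) : 0 < Rpower x y.
Proof. unfold Rpower. apply exp_pos. Qed.

Lemma pot_eq (p : R) (K : nat) (alpha : nat -> R) (a : R) (j : nat) (x : R) :
  0 < p -> 0 < alpha j ->
  Lplus_pot p K alpha a j x = (2 * p + 1) * (p + 1) * sech (p * (x + sh K a j)) ^ 2.
Proof.
  intros Hp Ha.
  assert (Hgen : forall y, (2 * p + 1) * (p + 1) * alpha j ^ 2 *
     Rpower (Rpower (alpha j) (- (1 / p)) * phi p y) (2 * p) =
     (2 * p + 1) * (p + 1) * sech (p * y) ^ 2).
  { intros y. unfold phi. destruct (sech_bounds (p * y)) as [Hs _].
    rewrite <- Rpower_mult_distr by (apply Rpower_pos).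
    rewrite !Rpower_mult.
    replace (- (1 / p) * (2 * p)) with (- INR 2) by (simpl; field; lra).
    replace (1 / p * (2 * p)) with (INR 2) by (simpl; field; lra).
    rewrite Rpower_Ropp. rewrite !Rpower_pow by auto.
    assert (alpha j ^ 2 <> 0) by (apply pow_nonzero; lra). field; auto; lra. }
  unfold Lplus_pot, Phi_comp, sh. destruct (j <? K)%nat.
  - apply Hgen.
  - replace (x + - a) with (x - a) by ring. apply Hgen.
Qed.

Lemma beta_facts (alpha : nat -> R) (p : R) (j : nat) :
  0 < p ->
  Rpower (alpha j) (1 / p) = / Rpower (alpha j) (- (1 / p)) /\
  Rpower (alpha j) (- (2 / p)) = Rpower (alpha j) (- (1 / p)) ^ 2.
Proof.
  intros Hp. split.
  - rewrite Rpower_Ropp. rewrite Rinv_inv. auto.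
  - simpl. rewrite Rmult_1_r. rewrite <- Rpower_plus. f_equal. field. lra.
Qed.

Lemma v_setup (p lambda0 : R) (v : R -> R) :
  0 < p -> lambda0 < 1 ->
  (forall x, ex_derive v x /\ ex_derive (Derive v) x) ->
  (forall x, - Derive (Derive v) x + v x
               - (2 * p + 1) * (p + 1) * (sech (p * x)) ^ 2 * v x
             = lambda0 * v x) ->
  is_lim (fun x => v x * exp (sqrt (1 - lambda0) * x)) p_infty 1 ->
  (forall x, is_derive v x (Derive v x)) /\
  (forall x, is_derive (Derive v) x (Qf p lambda0 x * v x)) /\
  0 < sqrt (1 - lambda0) /\
  dec (sqrt (1 - lambda0)) v /\ dec (sqrt (1 - lambda0)) (Derive v) /\
  dec (sqrt (1 - lambda0)) (fun y => Qf p lambda0 y * v y) /\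
  (exists X, forall x, X <= x -> 0 < v x) /\
  (forall s, v s = 0 -> Derive v s <> 0).
Proof.
  intros Hp Hl Hd Hode Hlim.
  set (k := sqrt (1 - lambda0)).
  set (MQ := Rabs (1 - lambda0) + (2 * p + 1) * (p + 1)).
  assert (HMQ : 0 <= MQ) by (unfold MQ; pose proof (Rabs_pos (1 - lambda0)); nra).
  assert (Hk : 0 < k) by (unfold k; apply sqrt_lt_R0; lra).
  assert (Hv : forall x, is_derive v x (Derive v x)).
  { intros x. destruct (Hd x) as [[d H] _]. rewrite (is_derive_unique v x d H). auto. }
  assert (Hv1 : forall x, is_derive (Derive v) x (Qf p lambda0 x * v x)).
  { intros x. destruct (Hd x) as [_ [d H]].
    replace (Qf p lambda0 x * v x) with d. auto.
    rewrite <- (is_derive_unique _ x d H). specialize (Hode x). unfold Qf. lra. }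
  assert (HQ : forall x, Rabs (Qf p lambda0 x) <= MQ) by (intros; apply Q_bound; auto).
  destruct (v_decay v (Qf p lambda0) k MQ Hk HMQ Hv Hv1 HQ Hlim) as [X HX].
  assert (Hvc : forall x, continuous v x).
  { intros x. apply (ex_derive_continuous (K:=R_AbsRing) (V:=R_NormedModule)). apply Hd. }
  assert (Hv1c : forall x, continuous (Derive v) x).
  { intros x. apply (ex_derive_continuous (K:=R_AbsRing) (V:=R_NormedModule)). apply Hd. }
  split; [exact Hv|]. split; [exact Hv1|]. split; [exact Hk|].
  split; [|split; [|split; [|split]]].
  - split; auto. exists 2, X. split; [lra|]. intros x Hx. apply HX; auto.
  - split; auto. exists (4 + 2 * MQ), X. split; [lra|]. intros x Hx. apply HX; auto.
  - split. { intros x. apply cont_mult_R; auto. apply Q_cont. }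
    exists (MQ * 2), X. split; [lra|]. intros x Hx. rewrite Rabs_mult.
    destruct (HX x Hx) as [_ [H1 _]]. pose proof (HQ x).
    rewrite Rmult_assoc. apply Rmult_le_compat; auto; apply Rabs_pos.
  - exists X. intros x Hx. apply HX; auto.
  - intros s Hs Hds.
    set (l := Rmin s X - 1).
    assert (H := ode_uniq l MQ (Qf p lambda0) v (Derive v) HMQ
      (fun x _ => Hv x) (fun x _ => Hv1 x) (fun x _ => HQ x) s).
    assert (Hsl : l < s) by (unfold l; pose proof (Rmin_l s X); lra).
    specialize (H Hsl Hs Hds (X + 1)).
    assert (Hxl : l < X + 1) by (unfold l; pose proof (Rmin_r s X); lra).
    specialize (H Hxl). destruct (HX (X + 1) ltac:(lra)) as [Hp1 _]. lra.
Qed.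


Lemma rsum_ext (f g : nat -> R) (n : nat) :
  (forall j, (j < n)%nat -> f j = g j) -> rsum f n = rsum g n.
Proof.
  induction n; intros H; simpl; auto.
  rewrite IHn by (intros; apply H; lia). rewrite H by lia. auto.
Qed.

Definition ContC (p : R) (N K : nat) (alpha : nat -> R) (a : R) (v : R -> R) (c : nat -> R) : Prop :=
  forall i j, (i < N)%nat -> (j < N)%nat ->
    Rpower (alpha i) (1 / p) * (c i * v (sh K a i)) = Rpower (alpha j) (1 / p) * (c j * v (sh K a j)).

Definition KirC (p : R) (N K : nat) (alpha : nat -> R) (a : R) (v : R -> R) (c : nat -> R) : Prop :=
  rsum (fun j => Rpower (alpha j) (- (1 / p)) * (c j * Derive v (sh K a j))) N = 0.

Lemma sh_bound (K : nat) (a : R) (j : nat) : - Rabs a <= sh K a j.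
Proof.
  unfold sh. destruct (j <? K)%nat.
  - pose proof (Rle_abs (-a)). rewrite Rabs_Ropp in H. lra.
  - pose proof (Rle_abs a). lra.
Qed.


Lemma E1 (p : R) (N K : nat) (alpha : nat -> R) (a lambda0 : R) (v : R -> R) :
  0 < p -> lambda0 < 1 ->
  (forall j, (j < N)%nat -> 0 < alpha j) ->
  (forall x, ex_derive v x /\ ex_derive (Derive v) x) ->
  (forall x, - Derive (Derive v) x + v x
               - (2 * p + 1) * (p + 1) * (sech (p * x)) ^ 2 * v x
             = lambda0 * v x) ->
  is_lim (fun x => v x * exp (sqrt (1 - lambda0) * x)) p_infty 1 ->
  forall U, Lplus_eigvec p N K alpha a lambda0 U ->
  exists c : nat -> R,
    (forall j x, (j < N)%nat -> 0 <= x -> U j x = c j * v (x + sh K a j)) /\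
    ContC p N K alpha a v c /\ KirC p N K alpha a v c.
Proof.
  intros Hp Hl Ha Hd Hode Hlim U [[HH2 [HC HK]] HU].
  destruct (v_setup p lambda0 v Hp Hl Hd Hode Hlim) as [Hv [Hv1 [Hk [D0 [D1 [D2 [[X HX] Hnz]]]]]]].
  set (xs := Rabs X + Rabs a + 1).
  assert (Hxs : 0 < xs) by (unfold xs; pose proof (Rabs_pos X); pose proof (Rabs_pos a); lra).
  assert (Hvs : forall j, v (xs + sh K a j) <> 0).
  { intros j. pose proof (sh_bound K a j). pose proof (Rle_abs X).
    assert (0 < v (xs + sh K a j)); [|lra]. apply HX. unfold xs. lra. }
  exists (fun j => U j xs / v (xs + sh K a j)).
  assert (Hedge : forall j, (j < N)%nat ->
    (forall x, 0 <= x -> U j x = U j xs / v (xs + sh K a j) * v (x + sh K a j)) /\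
    Derive (U j) 0 = U j xs / v (xs + sh K a j) * Derive v (sh K a j)).
  { intros j Hj.
    apply (edge_form v (Qf p lambda0) (U j) (sqrt (1 - lambda0))
             (Rabs (1 - lambda0) + (2 * p + 1) * (p + 1))); auto.
    - pose proof (Rabs_pos (1 - lambda0)). nra.
    - intros; apply Q_bound; auto.
    - intros x Hx. specialize (HU j x Hj Hx). rewrite pot_eq in HU by auto.
      unfold Qf. lra. }
  split; [|split].
  - intros j x Hj Hx. apply Hedge; auto.
  - intros i j Hi Hj. specialize (HC i j Hi Hj).
    destruct (Hedge i Hi) as [Ei _]. destruct (Hedge j Hj) as [Ej _].
    rewrite (Ei 0 (Rle_refl 0)), (Ej 0 (Rle_refl 0)) in HC.
    rewrite !Rplus_0_l in HC. exact HC.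
  - unfold KirC. rewrite <- HK. apply rsum_ext. intros j Hj.
    destruct (Hedge j Hj) as [_ Ej]. rewrite Ej. auto.
Qed.

Lemma E2 (p : R) (N K : nat) (alpha : nat -> R) (a lambda0 : R) (v : R -> R) :
  0 < p -> lambda0 < 1 ->
  (forall j, (j < N)%nat -> 0 < alpha j) ->
  (forall x, ex_derive v x /\ ex_derive (Derive v) x) ->
  (forall x, - Derive (Derive v) x + v x
               - (2 * p + 1) * (p + 1) * (sech (p * x)) ^ 2 * v x
             = lambda0 * v x) ->
  is_lim (fun x => v x * exp (sqrt (1 - lambda0) * x)) p_infty 1 ->
  forall c : nat -> R, ContC p N K alpha a v c -> KirC p N K alpha a v c ->
  Lplus_eigvec p N K alpha a lambda0 (fun j x => c j * v (x + sh K a j)).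
Proof.
  intros Hp Hl Ha Hd Hode Hlim c HC HK.
  destruct (v_setup p lambda0 v Hp Hl Hd Hode Hlim) as [Hv [Hv1 [Hk [D0 [D1 [D2 [[X HX] Hnz]]]]]]].
  split; [split; [|split]|].
  - intros j Hj. exact (H2_shift v (Qf p lambda0) _ (c j) (sh K a j) Hk Hv Hv1 D0 D1 D2).
  - intros i j Hi Hj. rewrite !Rplus_0_l. apply HC; auto.
  - rewrite <- HK. apply rsum_ext. intros j Hj.
    destruct (shift_derivs v (Qf p lambda0) (c j) (sh K a j) Hv Hv1) as [_ [E _]].
    rewrite E, Rplus_0_l. auto.
  - intros j x Hj Hx.
    destruct (shift_derivs v (Qf p lambda0) (c j) (sh K a j) Hv Hv1) as [_ [_ [_ E]]].
    rewrite E. rewrite pot_eq by auto. unfold Qf. ring.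
Qed.


Lemma rsum_ext' (f g : nat -> R) (n : nat) :
  (forall j, (j < n)%nat -> f j = g j) -> rsum f n = rsum g n.
Proof.
  induction n; intros H; simpl; auto.
  rewrite IHn by (intros; apply H; lia). rewrite H by lia. auto.
Qed.

Lemma rsum_zero (f : nat -> R) n : (forall j, (j < n)%nat -> f j = 0) -> rsum f n = 0.
Proof.
  induction n; intros H; simpl; auto. rewrite IHn by (intros; apply H; lia). rewrite H by lia. ring.
Qed.

Lemma rsum_one (f : nat -> R) n k : (k < n)%nat ->
  (forall j, (j < n)%nat -> j <> k -> f j = 0) -> rsum f n = f k.
Proof.
  induction n; intros Hk H; [lia|]. simpl.
  destruct (Nat.eq_dec k n) as [->|Hne].
  - rewrite rsum_zero. ring. intros; apply H; lia.
  - rewrite IHn by (try lia; intros; apply H; lia). rewrite (H n) by lia. ring.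
Qed.

Lemma rsum_two (f : nat -> R) n k1 k2 : k1 <> k2 -> (k1 < n)%nat -> (k2 < n)%nat ->
  (forall j, (j < n)%nat -> j <> k1 -> j <> k2 -> f j = 0) -> rsum f n = f k1 + f k2.
Proof.
  induction n; intros Hne Hk1 Hk2 H; [lia|]. simpl.
  destruct (Nat.eq_dec k1 n) as [->|Hn1].
  - rewrite (rsum_one f n k2) by (try lia; intros; apply H; lia). ring.
  - destruct (Nat.eq_dec k2 n) as [->|Hn2].
    + rewrite (rsum_one f n k1) by (try lia; intros; apply H; lia). ring.
    + rewrite IHn by (try lia; intros; apply H; lia). rewrite (H n) by lia. ring.
Qed.

Lemma rsum_split (f : nat -> R) n1 n2 :
  rsum f (n1 + n2) = rsum f n1 + rsum (fun i => f (n1 + i)%nat) n2.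
Proof.
  induction n2; simpl. rewrite Nat.add_0_r. ring.
  rewrite Nat.add_succ_r. simpl. rewrite IHn2. ring.
Qed.

Lemma rsum_scal (f : nat -> R) c n : rsum (fun j => c * f j) n = c * rsum f n.
Proof. induction n; simpl. ring. rewrite IHn. ring. Qed.

Lemma rsum_plus (f g : nat -> R) n : rsum (fun j => f j + g j) n = rsum f n + rsum g n.
Proof. induction n; simpl. ring. rewrite IHn. ring. Qed.

Lemma rsum_pos (f : nat -> R) n : (0 < n)%nat -> (forall j, (j < n)%nat -> 0 < f j) -> 0 < rsum f n.
Proof.
  induction n; intros Hn H; [lia|]. simpl. destruct n.
  - simpl. specialize (H 0%nat ltac:(lia)). lra.
  - assert (0 < rsum f (S n)) by (apply IHn; [lia|intros; apply H; lia]).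
    specialize (H (S n) ltac:(lia)). lra.
Qed.

Definition vsel (K : nat) (x y : R) (j : nat) : R := if (j <? K)%nat then x else y.

Lemma vsel_lt K x y j : (j < K)%nat -> vsel K x y j = x.
Proof. intros H. unfold vsel. destruct (Nat.ltb_spec j K); auto; lia. Qed.
Lemma vsel_ge K x y j : (K <= j)%nat -> vsel K x y j = y.
Proof. intros H. unfold vsel. destruct (Nat.ltb_spec j K); auto; lia. Qed.

Definition ContA (N K : nat) (b : nat -> R) (vA vB : R) (c : nat -> R) : Prop :=
  forall i j, (i < N)%nat -> (j < N)%nat ->
    / b i * (c i * vsel K vA vB i) = / b j * (c j * vsel K vA vB j).

Definition KirA (N K : nat) (b : nat -> R) (dA dB : R) (c : nat -> R) : Prop :=
  rsum (fun j => b j * (c j * vsel K dA dB j)) N = 0.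

Definition T1 (K : nat) (b c : nat -> R) := rsum (fun j => b j * c j) K.
Definition T2 (N K : nat) (b c : nat -> R) := rsum (fun i => b (K + i)%nat * c (K + i)%nat) (N - K).

Lemma kir_split N K b dA dB c : (K <= N)%nat ->
  rsum (fun j => b j * (c j * vsel K dA dB j)) N = dA * T1 K b c + dB * T2 N K b c.
Proof.
  intros HK. replace N with (K + (N - K))%nat at 1 by lia.
  rewrite rsum_split. unfold T1, T2. rewrite <- !rsum_scal. f_equal.
  - apply rsum_ext'. intros j Hj. rewrite vsel_lt by lia. ring.
  - apply rsum_ext'. intros j Hj. rewrite vsel_ge by lia. ring.
Qed.

Definition IsBasis (N m : nat) (Cont Kir : (nat -> R) -> Prop) (Cc : nat -> nat -> R) : Prop :=
  (forall k, (k < m)%nat -> Cont (Cc k) /\ Kir (Cc k)) /\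
  (forall d : nat -> R, (forall j, (j < N)%nat -> rsum (fun k => d k * Cc k j) m = 0) ->
     forall k, (k < m)%nat -> d k = 0) /\
  (forall c, Cont c -> Kir c -> exists d : nat -> R,
     forall j, (j < N)%nat -> c j = rsum (fun k => d k * Cc k j) m).


Definition fA (K : nat) (b : nat -> R) (k j : nat) : R :=
  if (j =? k)%nat then / b k else if (j =? K - 1)%nat then - / b (K - 1)%nat else 0.

Definition fB (N K : nat) (b : nat -> R) (k j : nat) : R :=
  if (j =? K + k)%nat then / b (K + k)%nat else if (j =? N - 1)%nat then - / b (N - 1)%nat else 0.

Lemma fA_1 K b e j : (j < K - 1)%nat ->
  rsum (fun k => e k * fA K b k j) (K - 1) = e j * / b j.
Proof.
  intros Hj. rewrite (rsum_one _ _ j Hj).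
  - unfold fA. rewrite Nat.eqb_refl. auto.
  - intros k Hk Hne. unfold fA. destruct (Nat.eqb_spec j k); [lia|].
    destruct (Nat.eqb_spec j (K - 1)); [lia|]. ring.
Qed.

Lemma fA_2 K b e :
  rsum (fun k => e k * fA K b k (K - 1)%nat) (K - 1) = - / b (K - 1)%nat * rsum e (K - 1).
Proof.
  rewrite <- rsum_scal. apply rsum_ext'. intros k Hk. unfold fA.
  destruct (Nat.eqb_spec (K - 1) k); [lia|]. rewrite Nat.eqb_refl. ring.
Qed.

Lemma fA_3 K b e j : (K <= j)%nat -> rsum (fun k => e k * fA K b k j) (K - 1) = 0.
Proof.
  intros Hj. apply rsum_zero. intros k Hk. unfold fA.
  destruct (Nat.eqb_spec j k); [lia|]. destruct (Nat.eqb_spec j (K - 1)); [lia|]. ring.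
Qed.

Lemma fB_1 N K b e i : (K <= N - 1)%nat -> (i < N - K - 1)%nat ->
  rsum (fun k => e k * fB N K b k (K + i)%nat) (N - K - 1) = e i * / b (K + i)%nat.
Proof.
  intros HK Hi. rewrite (rsum_one _ _ i Hi).
  - unfold fB. rewrite Nat.eqb_refl. auto.
  - intros k Hk Hne. unfold fB. destruct (Nat.eqb_spec (K + i) (K + k)); [lia|].
    destruct (Nat.eqb_spec (K + i) (N - 1)); [lia|]. ring.
Qed.

Lemma fB_2 N K b e : (K <= N - 1)%nat ->
  rsum (fun k => e k * fB N K b k (N - 1)%nat) (N - K - 1) = - / b (N - 1)%nat * rsum e (N - K - 1).
Proof.
  intros HK. rewrite <- rsum_scal. apply rsum_ext'. intros k Hk. unfold fB.
  destruct (Nat.eqb_spec (N - 1) (K + k)); [lia|]. rewrite Nat.eqb_refl. ring.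
Qed.

Lemma fB_3 N K b e j : (K <= N - 1)%nat -> (j < K)%nat ->
  rsum (fun k => e k * fB N K b k j) (N - K - 1) = 0.
Proof.
  intros HK Hj. apply rsum_zero. intros k Hk. unfold fB.
  destruct (Nat.eqb_spec j (K + k)); [lia|]. destruct (Nat.eqb_spec j (N - 1)); [lia|]. ring.
Qed.

Lemma fA_kir N K b dA dB k : (1 <= K)%nat -> (K <= N - 1)%nat -> (k < K - 1)%nat ->
  (forall j, (j < N)%nat -> 0 < b j) ->
  KirA N K b dA dB (fA K b k).
Proof.
  intros H1 HK Hk Hb. unfold KirA.
  rewrite (rsum_two _ N k (K - 1)); try lia.
  - unfold fA. rewrite Nat.eqb_refl. destruct (Nat.eqb_spec (K - 1) k); [lia|].
    rewrite Nat.eqb_refl. destruct (Nat.eqb_spec k (K-1)); [lia|].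
    rewrite !vsel_lt by lia. 
    assert (0 < b k) by (apply Hb; lia). assert (0 < b (K - 1)%nat) by (apply Hb; lia).
    field. lra.
  - intros j Hj H1' H2'. unfold fA. destruct (Nat.eqb_spec j k); [lia|].
    destruct (Nat.eqb_spec j (K - 1)); [lia|]. ring.
Qed.

Lemma fB_kir N K b dA dB k : (1 <= K)%nat -> (K <= N - 1)%nat -> (k < N - K - 1)%nat ->
  (forall j, (j < N)%nat -> 0 < b j) ->
  KirA N K b dA dB (fB N K b k).
Proof.
  intros H1 HK Hk Hb. unfold KirA.
  rewrite (rsum_two _ N (K + k) (N - 1)); try lia.
  - unfold fB. rewrite Nat.eqb_refl. destruct (Nat.eqb_spec (N - 1) (K + k)); [lia|].
    rewrite Nat.eqb_refl. destruct (Nat.eqb_spec (K + k) (N-1)); [lia|].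
    rewrite !vsel_ge by lia.
    assert (0 < b (K + k)%nat) by (apply Hb; lia). assert (0 < b (N - 1)%nat) by (apply Hb; lia).
    field. lra.
  - intros j Hj H1' H2'. unfold fB. destruct (Nat.eqb_spec j (K + k)); [lia|].
    destruct (Nat.eqb_spec j (N - 1)); [lia|]. ring.
Qed.

Lemma T1_last K b c : (1 <= K)%nat ->
  T1 K b c = rsum (fun k => b k * c k) (K - 1) + b (K - 1)%nat * c (K - 1)%nat.
Proof. intros H. unfold T1. replace K with (S (K - 1)) at 1 by lia. simpl. auto. Qed.

Lemma T2_last N K b c : (1 <= K)%nat -> (K <= N - 1)%nat ->
  T2 N K b c = rsum (fun k => b (K + k)%nat * c (K + k)%nat) (N - K - 1) + b (N - 1)%nat * c (N - 1)%nat.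
Proof.
  intros H0 H. unfold T2. replace (N - K)%nat with (S (N - K - 1)) at 1 by lia. simpl.
  replace (K + (N - K - 1))%nat with (N - 1)%nat by lia. auto.
Qed.


Lemma inv_pos_ne (x : R) : 0 < x -> / x <> 0.
Proof. intros H. apply Rinv_neq_0_compat. lra. Qed.

Lemma case3 N K b vA vB dA dB : (1 <= K)%nat -> (K <= N - 1)%nat ->
  (forall j, (j < N)%nat -> 0 < b j) -> vA = 0 -> vB <> 0 -> dA <> 0 ->
  IsBasis N (K - 1) (ContA N K b vA vB) (KirA N K b dA dB) (fA K b).
Proof.
  intros H1 HK Hb HvA HvB HdA.
  split; [|split].
  - intros k Hk. split.
    + assert (Hz : forall i, (i < N)%nat -> / b i * (fA K b k i * vsel K vA vB i) = 0).
      { intros i Hi. destruct (Nat.ltb_spec i K).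
        - rewrite vsel_lt by auto. rewrite HvA. ring.
        - unfold fA. destruct (Nat.eqb_spec i k); [lia|]. destruct (Nat.eqb_spec i (K - 1)); [lia|]. ring. }
      intros i j Hi Hj. rewrite (Hz i Hi), (Hz j Hj). auto.
    + apply fA_kir; auto.
  - intros d Hd k Hk. specialize (Hd k ltac:(lia)). rewrite fA_1 in Hd by lia.
    assert (0 < b k) by (apply Hb; lia). apply Rmult_integral in Hd. destruct Hd; auto.
    exfalso; apply (inv_pos_ne (b k)); auto.
  - intros c HC HKir.
    assert (Hc0 : forall j, (K <= j)%nat -> (j < N)%nat -> c j = 0).
    { intros j Hj HjN. specialize (HC 0%nat j ltac:(lia) HjN).
      rewrite vsel_lt in HC by lia. rewrite vsel_ge in HC by lia. rewrite HvA in HC.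
      assert (0 < b j) by (apply Hb; lia).
      assert (/ b j * (c j * vB) = 0) by lra.
      apply Rmult_integral in H0. destruct H0 as [H0|H0]. exfalso; apply (inv_pos_ne (b j)); auto.
      apply Rmult_integral in H0. destruct H0; auto. contradiction. }
    assert (HT2 : T2 N K b c = 0).
    { unfold T2. apply rsum_zero. intros i Hi. rewrite Hc0 by lia. ring. }
    unfold KirA in HKir. rewrite kir_split in HKir by lia. rewrite HT2 in HKir.
    assert (HT1 : T1 K b c = 0).
    { assert (dA * T1 K b c = 0) by lra. apply Rmult_integral in H. destruct H; auto. contradiction. }
    exists (fun k => b k * c k). intros j Hj.
    destruct (Compare_dec.lt_dec j (K - 1)) as [Hj1|Hj1].
    + rewrite fA_1 by auto. assert (0 < b j) by (apply Hb; lia). field. lra.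
    + destruct (Nat.eq_dec j (K - 1)) as [->|Hj2].
      * rewrite fA_2. rewrite T1_last in HT1 by auto.
        assert (0 < b (K - 1)%nat) by (apply Hb; lia).
        replace (rsum (fun k => b k * c k) (K - 1)) with (- (b (K - 1)%nat * c (K - 1)%nat)) by lra.
        field. lra.
      * rewrite fA_3 by lia. rewrite Hc0 by lia. auto.
Qed.

Lemma case4 N K b vA vB dA dB : (1 <= K)%nat -> (K <= N - 1)%nat ->
  (forall j, (j < N)%nat -> 0 < b j) -> vA <> 0 -> vB = 0 -> dB <> 0 ->
  IsBasis N (N - K - 1) (ContA N K b vA vB) (KirA N K b dA dB) (fB N K b).
Proof.
  intros H1 HK Hb HvA HvB HdB.
  split; [|split].
  - intros k Hk. split.
    + assert (Hz : forall i, (i < N)%nat -> / b i * (fB N K b k i * vsel K vA vB i) = 0).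
      { intros i Hi. destruct (Nat.ltb_spec i K).
        - unfold fB. destruct (Nat.eqb_spec i (K + k)); [lia|]. destruct (Nat.eqb_spec i (N - 1)); [lia|]. ring.
        - rewrite vsel_ge by auto. rewrite HvB. ring. }
      intros i j Hi Hj. rewrite (Hz i Hi), (Hz j Hj). auto.
    + apply fB_kir; auto.
  - intros d Hd k Hk. specialize (Hd (K + k)%nat ltac:(lia)). rewrite fB_1 in Hd by lia.
    assert (0 < b (K + k)%nat) by (apply Hb; lia). apply Rmult_integral in Hd. destruct Hd; auto.
    exfalso; apply (inv_pos_ne (b (K + k)%nat)); auto.
  - intros c HC HKir.
    assert (Hc0 : forall j, (j < K)%nat -> c j = 0).
    { intros j Hj. specialize (HC j K ltac:(lia) ltac:(lia)).
      rewrite vsel_lt in HC by lia. rewrite vsel_ge in HC by lia. rewrite HvB in HC.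
      assert (0 < b j) by (apply Hb; lia).
      assert (/ b j * (c j * vA) = 0) by lra.
      apply Rmult_integral in H0. destruct H0 as [H0|H0]. exfalso; apply (inv_pos_ne (b j)); auto.
      apply Rmult_integral in H0. destruct H0; auto. contradiction. }
    assert (HT1 : T1 K b c = 0).
    { unfold T1. apply rsum_zero. intros i Hi. rewrite Hc0 by lia. ring. }
    unfold KirA in HKir. rewrite kir_split in HKir by lia. rewrite HT1 in HKir.
    assert (HT2 : T2 N K b c = 0).
    { assert (dB * T2 N K b c = 0) by lra. apply Rmult_integral in H. destruct H; auto. contradiction. }
    exists (fun k => b (K + k)%nat * c (K + k)%nat). intros j Hj.
    destruct (Compare_dec.lt_dec j K) as [Hj1|Hj1].
    + rewrite fB_3 by lia. rewrite Hc0 by lia. auto.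
    + destruct (Nat.eq_dec j (N - 1)) as [->|Hj2].
      * rewrite fB_2 by lia. rewrite T2_last in HT2 by auto.
        assert (0 < b (N - 1)%nat) by (apply Hb; lia).
        replace (rsum (fun k => b (K + k)%nat * c (K + k)%nat) (N - K - 1)) with (- (b (N - 1)%nat * c (N - 1)%nat)) by lra.
        field. lra.
      * replace j with (K + (j - K))%nat by lia. rewrite fB_1 by lia.
        assert (0 < b (K + (j - K))%nat) by (apply Hb; lia). field. lra.
Qed.


Definition Ssum (K : nat) (b : nat -> R) := rsum (fun j => b j ^ 2) K.

Lemma gamma_form N K b vA vB c : (1 <= K)%nat -> (K <= N - 1)%nat ->
  (forall j, (j < N)%nat -> 0 < b j) -> vA <> 0 -> vB <> 0 ->
  ContA N K b vA vB c ->
  forall j, (j < N)%nat -> c j = (/ b 0%nat * (c 0%nat * vA)) * (b j / vsel K vA vB j).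
Proof.
  intros H1 HK Hb HvA HvB HC j Hj.
  specialize (HC 0%nat j ltac:(lia) Hj). rewrite (vsel_lt K vA vB 0) in HC by lia.
  rewrite HC. assert (0 < b j) by (apply Hb; lia).
  assert (vsel K vA vB j <> 0) by (unfold vsel; destruct (j <? K)%nat; auto).
  field. split; auto; lra.
Qed.

Lemma kir_gamma N K b vA vB dA dB g : (1 <= K)%nat -> (K <= N - 1)%nat ->
  rsum (fun j => b j ^ 2) K = rsum (fun i => b (K + i)%nat ^ 2) (N - K) ->
  vA <> 0 -> vB <> 0 ->
  rsum (fun j => b j * (g * (b j / vsel K vA vB j) * vsel K dA dB j)) N
  = g * Ssum K b * (vB * dA + vA * dB) / (vA * vB).
Proof.
  intros H1 HK HS HvA HvB.
  rewrite kir_split by lia. unfold T1, T2, Ssum.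
  rewrite (rsum_ext' _ (fun j => (g / vA) * b j ^ 2) K).
  2:{ intros j Hj. rewrite vsel_lt by lia. field. auto. }
  rewrite (rsum_ext' _ (fun i => (g / vB) * b (K + i)%nat ^ 2) (N - K)).
  2:{ intros j Hj. rewrite vsel_ge by lia. field. auto. }
  rewrite !rsum_scal. rewrite <- HS. field. auto.
Qed.

Lemma Ssum_pos N K b : (1 <= K)%nat -> (K <= N - 1)%nat ->
  (forall j, (j < N)%nat -> 0 < b j) -> 0 < Ssum K b.
Proof.
  intros H1 HK Hb. apply rsum_pos. lia. intros j Hj. assert (0 < b j) by (apply Hb; lia). nra.
Qed.

Lemma case1 N K b vA vB dA dB : (1 <= K)%nat -> (K <= N - 1)%nat ->
  (forall j, (j < N)%nat -> 0 < b j) ->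
  rsum (fun j => b j ^ 2) K = rsum (fun i => b (K + i)%nat ^ 2) (N - K) ->
  vA <> 0 -> vB <> 0 -> vB * dA + vA * dB <> 0 ->
  IsBasis N 0 (ContA N K b vA vB) (KirA N K b dA dB) (fun _ _ => 0).
Proof.
  intros H1 HK Hb HS HvA HvB HC.
  split; [|split].
  - intros; lia.
  - intros; lia.
  - intros c HCo HKir. exists (fun _ => 0). intros j Hj. simpl.
    set (g := / b 0%nat * (c 0%nat * vA)).
    pose proof (gamma_form N K b vA vB c H1 HK Hb HvA HvB HCo) as Hg.
    unfold KirA in HKir.
    rewrite (rsum_ext' _ (fun j => b j * (g * (b j / vsel K vA vB j) * vsel K dA dB j))) in HKir.
    2:{ intros i Hi. rewrite <- Hg by auto. auto. }
    rewrite kir_gamma in HKir by auto.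
    pose proof (Ssum_pos N K b H1 HK Hb).
    assert (g = 0).
    { assert (g * Ssum K b * (vB * dA + vA * dB) = 0).
      { apply Rmult_eq_reg_r with (/ (vA * vB)). rewrite Rmult_0_l. exact HKir.
        apply Rinv_neq_0_compat. apply Rmult_integral_contrapositive; auto. }
      apply Rmult_integral in H0. destruct H0 as [H0|H0]; [|contradiction].
      apply Rmult_integral in H0. destruct H0; auto. lra. }
    rewrite Hg by auto. fold g. rewrite H0. ring.
Qed.

Lemma case2 N K b vA vB dA dB : (1 <= K)%nat -> (K <= N - 1)%nat ->
  (forall j, (j < N)%nat -> 0 < b j) ->
  rsum (fun j => b j ^ 2) K = rsum (fun i => b (K + i)%nat ^ 2) (N - K) ->
  vA <> 0 -> vB <> 0 -> vB * dA + vA * dB = 0 ->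
  IsBasis N 1 (ContA N K b vA vB) (KirA N K b dA dB) (fun _ j => b j / vsel K vA vB j).
Proof.
  intros H1 HK Hb HS HvA HvB HC.
  assert (Hvs : forall j, vsel K vA vB j <> 0) by (intros; unfold vsel; destruct (j <? K)%nat; auto).
  split; [|split].
  - intros k Hk. split.
    + intros i j Hi Hj. assert (0 < b i) by (apply Hb; lia). assert (0 < b j) by (apply Hb; lia).
      pose proof (Hvs i). pose proof (Hvs j). field. repeat split; auto; lra.
    + unfold KirA.
      rewrite (rsum_ext' _ (fun j => b j * (1 * (b j / vsel K vA vB j) * vsel K dA dB j))).
      2:{ intros; ring. }
      rewrite kir_gamma by auto. rewrite HC. field. auto.
  - intros d Hd k Hk. assert (k = 0%nat) by lia. subst k.
    specialize (Hd 0%nat ltac:(lia)). simpl in Hd.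
    assert (0 < b 0%nat) by (apply Hb; lia).
    assert (d 0%nat * (b 0%nat / vsel K vA vB 0) = 0) by lra.
    apply Rmult_integral in H0. destruct H0; auto.
    exfalso. unfold Rdiv in H0. apply Rmult_integral in H0. destruct H0. lra.
    revert H0. apply Rinv_neq_0_compat. auto.
  - intros c HCo HKir. exists (fun _ => / b 0%nat * (c 0%nat * vA)). intros j Hj. simpl.
    rewrite (gamma_form N K b vA vB c H1 HK Hb HvA HvB HCo j Hj) at 1. ring.
Qed.


Definition fC5 (N K : nat) (b : nat -> R) (dA dB : R) (j : nat) : R :=
  if (j =? K - 1)%nat then / (b (K - 1)%nat * dA)
  else if (j =? N - 1)%nat then - / (b (N - 1)%nat * dB) else 0.

Definition Cc5 (N K : nat) (b : nat -> R) (dA dB : R) (k : nat) : nat -> R :=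
  if (k <? K - 1)%nat then fA K b k
  else if (k <? K - 1 + (N - K - 1))%nat then fB N K b (k - (K - 1))
  else fC5 N K b dA dB.

Lemma sum5 N K b dA dB d j :
  rsum (fun k => d k * Cc5 N K b dA dB k j) (K - 1 + (N - K - 1) + 1)
  = rsum (fun k => d k * fA K b k j) (K - 1)
    + rsum (fun i => d (K - 1 + i)%nat * fB N K b i j) (N - K - 1)
    + d (K - 1 + (N - K - 1))%nat * fC5 N K b dA dB j.
Proof.
  rewrite !rsum_split. simpl. rewrite Nat.add_0_r. f_equal; [f_equal|].
  - apply rsum_ext'. intros k Hk. unfold Cc5. destruct (Nat.ltb_spec k (K - 1)); [auto|lia].
  - apply rsum_ext'. intros i Hi. unfold Cc5.
    destruct (Nat.ltb_spec (K - 1 + i) (K - 1)); [lia|].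
    destruct (Nat.ltb_spec (K - 1 + i) (K - 1 + (N - K - 1))); [|lia].
    replace (K - 1 + i - (K - 1))%nat with i by lia. auto.
  - rewrite Rplus_0_l. unfold Cc5.
    destruct (Nat.ltb_spec (K - 1 + (N - K - 1)) (K - 1)); [lia|].
    destruct (Nat.ltb_spec (K - 1 + (N - K - 1)) (K - 1 + (N - K - 1))); [lia|]. auto.
Qed.

Lemma fC5_0 N K b dA dB j : j <> (K - 1)%nat -> j <> (N - 1)%nat -> fC5 N K b dA dB j = 0.
Proof.
  intros H1 H2. unfold fC5. destruct (Nat.eqb_spec j (K - 1)); [lia|].
  destruct (Nat.eqb_spec j (N - 1)); [lia|]. auto.
Qed.

Lemma fC5_1 N K b dA dB : (1 <= K)%nat -> (K <= N - 1)%nat ->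
  fC5 N K b dA dB (K - 1)%nat = / (b (K - 1)%nat * dA).
Proof. intros. unfold fC5. rewrite Nat.eqb_refl. auto. Qed.

Lemma fC5_2 N K b dA dB : (1 <= K)%nat -> (K <= N - 1)%nat ->
  fC5 N K b dA dB (N - 1)%nat = - / (b (N - 1)%nat * dB).
Proof.
  intros. unfold fC5. destruct (Nat.eqb_spec (N - 1) (K - 1)); [lia|]. rewrite Nat.eqb_refl. auto.
Qed.

Lemma case5 N K b dA dB : (1 <= K)%nat -> (K <= N - 1)%nat ->
  (forall j, (j < N)%nat -> 0 < b j) -> dA <> 0 -> dB <> 0 ->
  IsBasis N (K - 1 + (N - K - 1) + 1) (ContA N K b 0 0) (KirA N K b dA dB) (Cc5 N K b dA dB).
Proof.
  intros H1 HK Hb HdA HdB.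
  assert (HCont : forall c, ContA N K b 0 0 c).
  { intros c i j Hi Hj. assert (forall l, vsel K 0 0 l = 0) by (intros; unfold vsel; destruct (l <? K)%nat; auto).
    rewrite !H. ring. }
  assert (HbK : 0 < b (K - 1)%nat) by (apply Hb; lia).
  assert (HbN : 0 < b (N - 1)%nat) by (apply Hb; lia).
  split; [|split].
  - intros k Hk. split; [apply HCont|]. unfold Cc5.
    destruct (Nat.ltb_spec k (K - 1)).
    + apply fA_kir; auto.
    + destruct (Nat.ltb_spec k (K - 1 + (N - K - 1))).
      * apply fB_kir; auto; lia.
      * unfold KirA. rewrite (rsum_two _ N (K - 1) (N - 1)); try lia.
        -- rewrite fC5_1, fC5_2 by auto. rewrite vsel_lt by lia. rewrite vsel_ge by lia.
           field. split; auto; lra.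
        -- intros j Hj Hj1 Hj2. rewrite fC5_0 by auto. ring.
  - intros d Hd.
    assert (HA : forall k, (k < K - 1)%nat -> d k = 0).
    { intros k Hk. specialize (Hd k ltac:(lia)). rewrite sum5 in Hd.
      rewrite fA_1 in Hd by auto. rewrite fB_3 in Hd by lia. rewrite fC5_0 in Hd by lia.
      assert (0 < b k) by (apply Hb; lia).
      assert (d k * / b k = 0) by lra. apply Rmult_integral in H0. destruct H0; auto.
      exfalso; revert H0; apply inv_pos_ne; auto. }
    assert (HB : forall i, (i < N - K - 1)%nat -> d (K - 1 + i)%nat = 0).
    { intros i Hi. specialize (Hd (K + i)%nat ltac:(lia)). rewrite sum5 in Hd.
      rewrite fA_3 in Hd by lia. rewrite fB_1 in Hd by lia. rewrite fC5_0 in Hd by lia.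
      assert (0 < b (K + i)%nat) by (apply Hb; lia).
      assert (d (K - 1 + i)%nat * / b (K + i)%nat = 0) by lra. apply Rmult_integral in H0. destruct H0; auto.
      exfalso; revert H0; apply inv_pos_ne; auto. }
    assert (HC : d (K - 1 + (N - K - 1))%nat = 0).
    { specialize (Hd (K - 1)%nat ltac:(lia)). rewrite sum5 in Hd.
      rewrite fA_2 in Hd. rewrite rsum_zero in Hd by auto. rewrite fB_3 in Hd by lia.
      rewrite fC5_1 in Hd by auto.
      assert (d (K - 1 + (N - K - 1))%nat * / (b (K - 1)%nat * dA) = 0) by lra.
      apply Rmult_integral in H. destruct H; auto. exfalso; revert H.
      apply Rinv_neq_0_compat. apply Rmult_integral_contrapositive; split; auto; lra. }
    intros k Hk.
    destruct (Compare_dec.lt_dec k (K - 1)). apply HA; auto.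
    destruct (Compare_dec.lt_dec k (K - 1 + (N - K - 1))).
    + replace k with (K - 1 + (k - (K - 1)))%nat by lia. apply HB. lia.
    + replace k with (K - 1 + (N - K - 1))%nat by lia. auto.
  - intros c _ HKir. unfold KirA in HKir. rewrite kir_split in HKir by lia.
    exists (fun k => if (k <? K - 1)%nat then b k * c k
                     else if (k <? K - 1 + (N - K - 1))%nat then b (K + (k - (K - 1)))%nat * c (K + (k - (K - 1)))%nat
                     else - dB * T2 N K b c).
    intros j Hj. rewrite sum5.
    rewrite (rsum_ext' _ (fun k => (b k * c k) * fA K b k j) (K - 1)).
    2:{ intros k Hk. destruct (Nat.ltb_spec k (K - 1)); [auto|lia]. }
    rewrite (rsum_ext' _ (fun i => (b (K + i)%nat * c (K + i)%nat) * fB N K b i j) (N - K - 1)).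
    2:{ intros i Hi. destruct (Nat.ltb_spec (K - 1 + i) (K - 1)); [lia|].
        destruct (Nat.ltb_spec (K - 1 + i) (K - 1 + (N - K - 1))); [|lia].
        replace (K - 1 + i - (K - 1))%nat with i by lia. auto. }
    destruct (Nat.ltb_spec (K - 1 + (N - K - 1)) (K - 1)); [lia|].
    destruct (Nat.ltb_spec (K - 1 + (N - K - 1)) (K - 1 + (N - K - 1))); [lia|].
    destruct (Compare_dec.lt_dec j (K - 1)) as [Hj1|Hj1].
    + rewrite fA_1 by auto. rewrite fB_3 by lia. rewrite fC5_0 by lia.
      assert (0 < b j) by (apply Hb; lia). field. lra.
    + destruct (Nat.eq_dec j (K - 1)) as [->|Hj2].
      * rewrite fA_2. rewrite fB_3 by lia. rewrite fC5_1 by auto.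
        rewrite T1_last in HKir by auto.
        set (RR := rsum (fun k => b k * c k) (K - 1)) in *.
        assert (HR : RR = (- (dB * T2 N K b c) - dA * (b (K - 1)%nat * c (K - 1)%nat)) / dA).
        { apply (Rmult_eq_reg_l dA); auto. field_simplify; auto. lra. }
        rewrite HR. field. split; auto; lra.
      * destruct (Nat.eq_dec j (N - 1)) as [->|Hj3].
        -- rewrite fA_3 by lia. rewrite fB_2 by lia. rewrite fC5_2 by auto.
           rewrite T2_last by auto. field. split; auto; lra.
        -- replace j with (K + (j - K))%nat by lia.
           rewrite fA_3 by lia. rewrite fB_1 by lia. rewrite fC5_0 by lia.
           assert (0 < b (K + (j - K))%nat) by (apply Hb; lia). field. lra.
Qed.


Lemma algebra N K b vA vB dA dB : (1 <= K)%nat -> (K <= N - 1)%nat ->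
  (forall j, (j < N)%nat -> 0 < b j) ->
  rsum (fun j => b j ^ 2) K = rsum (fun i => b (K + i)%nat ^ 2) (N - K) ->
  (vA = 0 -> dA <> 0) -> (vB = 0 -> dB <> 0) ->
  exists Cc, IsBasis N
   ((if Req_EM_T vA 0 then (K - 1)%nat else 0%nat)
     + (if Req_EM_T vB 0 then (N - K - 1)%nat else 0%nat)
     + (if Req_EM_T (vB * dA + vA * dB) 0 then 1%nat else 0%nat))%nat
   (ContA N K b vA vB) (KirA N K b dA dB) Cc.
Proof.
  intros H1 HK Hb HS HA HB.
  destruct (Req_EM_T vA 0) as [EA|EA]; destruct (Req_EM_T vB 0) as [EB|EB];
  destruct (Req_EM_T (vB * dA + vA * dB) 0) as [EC|EC].
  - subst vA vB. exists (Cc5 N K b dA dB). apply case5; auto.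
  - exfalso. apply EC. rewrite EA, EB. ring.
  - exfalso. rewrite EA in EC. assert (vB * dA = 0) by lra.
    apply Rmult_integral in H. destruct H; auto. apply (HA EA); auto.
  - rewrite !Nat.add_0_r. exists (fA K b). apply case3; auto.
  - exfalso. rewrite EB in EC. assert (vA * dB = 0) by lra.
    apply Rmult_integral in H. destruct H; auto. apply (HB EB); auto.
  - simpl. rewrite Nat.add_0_r. exists (fB N K b). apply case4; auto.
  - simpl. exists (fun _ j => b j / vsel K vA vB j). apply case2; auto.
  - simpl. exists (fun _ _ => 0). apply case1; auto.
Qed.


Lemma rsum_mult_r (f : nat -> R) w n : rsum (fun k => f k * w) n = rsum f n * w.
Proof. induction n; simpl. ring. rewrite IHn. ring. Qed.

Lemma v_sh_vsel (K : nat) (a : R) (g : R -> R) j : g (sh K a j) = vsel K (g a) (g (- a)) j.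
Proof. unfold sh, vsel. destruct (j <? K)%nat; auto. Qed.

Theorem lemma5p4 (p : R) (N K : nat) (alpha : nat -> R) (a lambda0 : R)
  (v : R -> R) :
  0 < p ->
  (2 <= N)%nat ->
  (1 <= K)%nat -> (K <= N - 1)%nat ->
  (forall j, (j < N)%nat -> 0 < alpha j) ->
  rsum (fun j => Rpower (alpha j) (- (2 / p))) K
    = rsum (fun i => Rpower (alpha (K + i)%nat) (- (2 / p))) (N - K) ->
  lambda0 < 1 ->
  (forall x, ex_derive v x /\ ex_derive (Derive v) x) ->
  (forall x, - Derive (Derive v) x + v x
               - (2 * p + 1) * (p + 1) * (sech (p * x)) ^ 2 * v x
             = lambda0 * v x) ->
  is_lim (fun x => v x * exp (sqrt (1 - lambda0) * x)) p_infty 1 ->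
  let m := ((if Req_EM_T (v a) 0 then (K - 1)%nat else 0%nat)
          + (if Req_EM_T (v (- a)) 0 then (N - K - 1)%nat else 0%nat)
          + (if Req_EM_T (v (- a) * Derive v a + v a * Derive v (- a)) 0
             then 1%nat else 0%nat))%nat in
  (Lplus_eigenvalue p N K alpha a lambda0 <-> (0 < m)%nat) /\
  eigenspace_dim p N K alpha a lambda0 m.
Proof.
  intros Hp HN HK1 HK2 Ha HS Hl Hd Hode Hlim m.
  destruct (v_setup p lambda0 v Hp Hl Hd Hode Hlim) as [Hv [Hv1 [Hkp [D0 [D1 [D2 [[X HX] Hnz]]]]]]].
  set (b := fun j => Rpower (alpha j) (- (1 / p))).
  assert (Hb : forall j, (j < N)%nat -> 0 < b j) by (intros; unfold b; apply Rpower_pos).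
  assert (HS' : rsum (fun j => b j ^ 2) K = rsum (fun i => b (K + i)%nat ^ 2) (N - K)).
  { rewrite (rsum_ext' (fun j => b j ^ 2) (fun j => Rpower (alpha j) (- (2 / p)))).
    rewrite (rsum_ext' (fun i => b (K + i)%nat ^ 2) (fun i => Rpower (alpha (K + i)%nat) (- (2 / p)))).
    exact HS.
    - intros; unfold b; symmetry; apply beta_facts; auto.
    - intros; unfold b; symmetry; apply beta_facts; auto. }
  destruct (algebra N K b (v a) (v (- a)) (Derive v a) (Derive v (- a)) HK1 HK2 Hb HS'
              (Hnz a) (Hnz (- a))) as [Cc HB].
  assert (HBm : IsBasis N m (ContA N K b (v a) (v (- a))) (KirA N K b (Derive v a) (Derive v (- a))) Cc)
    by exact HB.
  clear HB. destruct HBm as [HCK [Hind Hspan]].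
  assert (HCont : forall c, ContC p N K alpha a v c <-> ContA N K b (v a) (v (- a)) c).
  { intros c. unfold ContC, ContA. split; intros H i j Hi Hj.
    - specialize (H i j Hi Hj). rewrite !(v_sh_vsel K a v) in H.
      rewrite !(proj1 (beta_facts alpha p _ Hp)) in H. exact H.
    - rewrite !(v_sh_vsel K a v). rewrite !(proj1 (beta_facts alpha p _ Hp)). apply H; auto. }
  assert (HKir : forall c, KirC p N K alpha a v c <-> KirA N K b (Derive v a) (Derive v (- a)) c).
  { intros c. unfold KirC, KirA.
    rewrite (rsum_ext' (fun j => Rpower (alpha j) (- (1 / p)) * (c j * Derive v (sh K a j)))
                       (fun j => b j * (c j * vsel K (Derive v a) (Derive v (- a)) j))).
    tauto. intros j Hj. rewrite (v_sh_vsel K a (Derive v)). auto. }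
  set (F := fun k j x => Cc k j * v (x + sh K a j)).
  set (xs := Rabs X + Rabs a + 1).
  assert (Hvs : forall j, 0 < v (xs + sh K a j)).
  { intros j. pose proof (sh_bound K a j). pose proof (Rle_abs X).
    apply HX. unfold xs. lra. }
  assert (Hxs : 0 <= xs) by (unfold xs; pose proof (Rabs_pos X); pose proof (Rabs_pos a); lra).
  assert (HF1 : forall k, (k < m)%nat -> Lplus_eigvec p N K alpha a lambda0 (F k)).
  { intros k Hk. destruct (HCK k Hk) as [C1 C2].
    apply (E2 p N K alpha a lambda0 v Hp Hl Ha Hd Hode Hlim); [apply HCont|apply HKir]; auto. }
  assert (HF2 : forall c : nat -> R,
        is_zero_Gamma N (fun j x => rsum (fun k => c k * F k j x) m) ->
        forall k, (k < m)%nat -> c k = 0).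
  { intros c Hz. apply Hind. intros j Hj. specialize (Hz j xs Hj Hxs). simpl in Hz.
    unfold F in Hz.
    rewrite (rsum_ext' _ (fun k => (c k * Cc k j) * v (xs + sh K a j))) in Hz.
    2:{ intros; ring. }
    rewrite rsum_mult_r in Hz. specialize (Hvs j).
    apply Rmult_integral in Hz. destruct Hz; auto. lra. }
  assert (HF3 : forall U, Lplus_eigvec p N K alpha a lambda0 U ->
       exists c : nat -> R,
         forall j x, (j < N)%nat -> 0 <= x ->
           U j x = rsum (fun k => c k * F k j x) m).
  { intros U HU.
    destruct (E1 p N K alpha a lambda0 v Hp Hl Ha Hd Hode Hlim U HU) as [c [Hc [C1 C2]]].
    destruct (Hspan c (proj1 (HCont c) C1) (proj1 (HKir c) C2)) as [d Hdd].
    exists d. intros j x Hj Hx. rewrite Hc by auto. rewrite Hdd by auto.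
    unfold F. rewrite <- rsum_mult_r. apply rsum_ext'. intros; ring. }
  split.
  - split.
    + intros [U [HU Hnz0]]. destruct m as [|m'] eqn:Em; [|lia]. exfalso. apply Hnz0.
      destruct (HF3 U HU) as [c Hc]. intros j x Hj Hx. rewrite Hc by auto. reflexivity.
    + intros Hm. exists (F 0%nat). split. apply HF1; auto.
      intros Hz. 
      assert (H0 := HF2 (fun k => if (k =? 0)%nat then 1 else 0)).
      assert (1 = 0); [|lra].
      replace 1 with ((fun k : nat => if (k =? 0)%nat then 1 else 0) 0%nat) by reflexivity.
      apply H0; auto.
      intros j x Hj Hx. rewrite (rsum_one _ m 0%nat Hm).
      * simpl. rewrite (Hz j x Hj Hx). ring.
      * intros k Hk Hne. destruct (Nat.eqb_spec k 0); [lia|]. ring.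
  - exists F. split; [exact HF1|split; [exact HF2|exact HF3]].
Qed.
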